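(* Let $G=(V,E)$ be a finite connected graph with nodes $V=\{v_1,\dots,v_n\}$, let $S=\{v_1,\dots,v_\sigma\}$ with $\sigma\ge1$ be the set of sources, and assume the non-sources are ordered so that $\deg_G(v_{\sigma+1})\ge\deg_G(v_{\sigma+2})\ge\cdots\ge\deg_G(v_n)$. Fix $t\in\mathbb{Z}_{\ge 0}$. Consider all tuples $(V_0,\dots,V_t,\pi)$ with $V_0\subseteq V_1\subseteq\cdots\subseteq V_t\subseteq V$ and $\pi:V\setminus S\to V$ satisfying: $V_0=S$; for all $k=1,\dots,t$ and all $v\in V_k\setminus S$, $\pi(v)\in V_{k-1}$; for all $k=1,\dots,t$ and all $u,v\in V_k\setminus V_{k-1}$, $\pi(u)=\pi(v)$ only if $u=v$; and for all $v\in V$, $|\pi^{-1}(v)|\le \deg_G(v)-\delta_{v\in V\setminus S}$ (here $\pi$ need not map along edges of $G$). Then the maximum of $|V_t|$ over all such tuples is attained by a tuple satisfying, for every $k=1,\dots,t$, $$\min\{i: v_i\in V_k\setminus V_{k-1}\}>\max\{i: v_i\in V_{k-1}\}.$$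
   Context: $\deg_G(v)$ is the degree of $v$ in $G$; $\delta_p=1$ if proposition $p$ is true and $0$ otherwise; $\pi^{-1}(v)=\{u\in V\setminus S:\pi(u)=v\}$. The minimum over an empty set is taken to be $+\infty$. *)

(* Defs.v *)
From mathcomp Require Import all_boot.
Set Implicit Arguments. Unset Strict Implicit. Unset Printing Implicit Defensive.

(* Nodes v_1,...,v_n are represented by 'I_n : node i stands for v_(i+1).
   A finite simple graph is a symmetric irreflexive relation on 'I_n. *)
Definition simple_graph n (e : rel 'I_n) : Prop :=
  symmetric e /\ irreflexive e.

Definition connected_graph n (e : rel 'I_n) : Prop :=
  forall x y : 'I_n, connect e x y.

Definition deg n (e : rel 'I_n) (v : 'I_n) : nat := #|[set u | e v u]|.

Definition sources n (sigma : nat) : {set 'I_n} := [set i : 'I_n | i < sigma].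

(* |pi^{-1}(v)| where pi^{-1}(v) = {u in V \ S : pi u = v};
   pi is a total function on 'I_n but only its values on V \ S matter. *)
Definition preim_count n sigma (pi : 'I_n -> 'I_n) (v : 'I_n) : nat :=
  #|[set u | (u \notin sources n sigma) && (pi u == v)]|.

Definition admissible n sigma t (e : rel 'I_n)
    (Vs : nat -> {set 'I_n}) (pi : 'I_n -> 'I_n) : Prop :=
  [/\ Vs 0 = sources n sigma,
      (forall k, 0 < k <= t -> Vs k.-1 \subset Vs k),
      (forall k, 0 < k <= t -> forall v,
          v \in Vs k :\: sources n sigma -> pi v \in Vs k.-1),
      (forall k, 0 < k <= t -> forall u v,
          u \in Vs k :\: Vs k.-1 -> v \in Vs k :\: Vs k.-1 ->
          pi u = pi v -> u = v) &
      (* |pi^{-1}(v)| <= deg(v) - delta_{v in V\S}, written additively *)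
      (forall v, preim_count sigma pi v + (v \notin sources n sigma) <= deg e v)].

(* min{i : v_i in V_k \ V_(k-1)} > max{i : v_i in V_(k-1)} for all k = 1..t,
   with min over the empty set = +oo: every index in V_k \ V_(k-1) exceeds
   every index in V_(k-1). *)
Definition layered n t (Vs : nat -> {set 'I_n}) : Prop :=
  forall k, 0 < k <= t ->
    forall i j : 'I_n, i \in Vs k :\: Vs k.-1 -> j \in Vs k.-1 -> j < i.

(* Main.v *)
Require Import Defs.
From mathcomp Require Import all_boot zify.
From Stdlib Require Import Classical.
Set Implicit Arguments. Unset Strict Implicit. Unset Printing Implicit Defensive.

Section Exist.
Variables (n sigma : nat) (e : rel 'I_n).
Hypothesis He : simple_graph e.
Hypothesis Hconn : connected_graph e.
Hypothesis Hsigma : 1 <= sigma.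
Hypothesis Hsn : sigma <= n.

Local Notation S := (sources n sigma).

Fixpoint R (k : nat) : {set 'I_n} :=
  if k is k'.+1 then R k' :|: [set u | [exists w, (w \in R k') && e u w]]
  else S.

Lemma R_mono k : R k \subset R k.+1.
Proof. by rewrite /= subsetUl. Qed.

Lemma R_mono' k l : k <= l -> R k \subset R l.
Proof.
elim: l => [|l IH]; first by rewrite leqn0 => /eqP ->.
rewrite leq_eqVlt => /orP [/eqP -> //| H].
exact: subset_trans (IH H) (R_mono l).
Qed.

Lemma reachR u : exists k, u \in R k.
Proof.
have n0 : 0 < n by lia.
have s0S : (Ordinal n0) \in S by rewrite inE /=.
have /connectP [p Hp Hl] := Hconn u (Ordinal n0).
exists (size p).
elim: p u Hp Hl => [|y p IH] u /=; first by move=> _ <-.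
move=> /andP [euy Hp] Hl.
have := IH y Hp Hl => Hy.
rewrite inE; apply/orP; right; rewrite inE; apply/existsP; exists y.
by rewrite Hy euy.
Qed.

Definition d u := ex_minn (reachR u).

Lemma d_in u : u \in R (d u).
Proof. by rewrite /d; case: ex_minnP. Qed.

Lemma d_min u k : u \in R k -> d u <= k.
Proof. by rewrite /d; case: ex_minnP => m _ H /H. Qed.

Lemma d_par u : u \notin S -> exists w, e u w && (d w < d u).
Proof.
move=> uS.
have := d_in u; case Hd: (d u) => [|m].
  by move=> /= H; rewrite H in uS.
rewrite /= inE => /orP [H|].
  by have := d_min H; rewrite Hd ltnn.
rewrite inE => /existsP [w /andP [wR euw]].
exists w; rewrite euw /=.
by have := d_min wR; lia.
Qed.

Definition pi0 u := odflt u [pick w | e u w && (d w < d u)].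

Lemma pi0P u : u \notin S -> e u (pi0 u) && (d (pi0 u) < d u).
Proof.
move=> /d_par [w Hw]; rewrite /pi0.
by case: pickP => [x Hx|/(_ w)] /=; [| rewrite Hw].
Qed.

Lemma exists_adm t : exists Vs pi, admissible sigma t e Vs pi.
Proof.
exists (fun _ => S), pi0; split => //.
- by move=> k _ v; rewrite setDv inE.
- by move=> k _ u v; rewrite setDv inE.
move=> v; rewrite /deg /preim_count.
have Hsub : [set u | (u \notin S) && (pi0 u == v)] \subset
            [set u | e v u && (d v < d u)].
  apply/subsetP => u; rewrite !inE => /andP [uS /eqP <-].
  have uS' : u \notin S by rewrite inE.
  have /andP [H1 H2] := pi0P uS'.
  by rewrite H2 andbT; case: He => Hsym _; rewrite Hsym.
case: (boolP (v \in S)) => vS /=.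
  rewrite addn0; apply: leq_trans (subset_leq_card Hsub) _.
  by apply: subset_leq_card; apply/subsetP => u; rewrite !inE => /andP [].
have /andP [H1 H2] := pi0P vS.
rewrite (cardsD1 (pi0 v) [set u | e v u]) inE H1.
rewrite addnC leq_add2l.
apply: leq_trans (subset_leq_card Hsub) _.
apply: subset_leq_card; apply/subsetP => u; rewrite !inE => /andP [-> H].
rewrite andbT; apply/eqP => Eu; move: H2; rewrite -Eu; lia.
Qed.

End Exist.

Section Move.
Variables (n sigma t : nat) (e : rel 'I_n).
Local Notation S := (sources n sigma).
Variables (W : nat -> {set 'I_n}) (p1 : 'I_n -> 'I_n) (i j : 'I_n).
Hypothesis H0 : W 0 = S.
Hypothesis Hsub : forall k, 0<k<=t -> W k.-1 \subset W k.
Hypothesis Hpar : forall k, 0<k<=t -> forall v, v \in W k :\: S -> p1 v \in W k.-1.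
Hypothesis Hinj : forall k, 0<k<=t -> forall u v, u \in W k :\: W k.-1 ->
   v \in W k :\: W k.-1 -> p1 u = p1 v -> u = v.
Hypothesis Hpj : forall k, 0<k<=t -> forall u, u \in W k :\: S -> p1 u = j -> i \in W k.-1.
Hypothesis Hcap : forall v, v != i -> v != j -> preim_count sigma p1 v + (v \notin S) <= deg e v.
Hypothesis iS : i \notin S.
Hypothesis jS : j \notin S.
Hypothesis ij : i != j.
Hypothesis Hc1 : preim_count sigma p1 i + 1 <= deg e j.
Hypothesis Hc2 : preim_count sigma p1 i + preim_count sigma p1 j + 2 <= deg e i + deg e j.
Hypothesis Hdeg : deg e j <= deg e i.

Lemma Wmono a b : a <= b <= t -> W a \subset W b.
Proof.
elim: b => [|b IH]; first by rewrite leqn0 => /andP [/eqP -> _].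
move=> /andP []; rewrite leq_eqVlt => /orP [/eqP -> //| H] Hb.
have H1 : a <= b <= t by lia.
have H2 : 0 < b.+1 <= t by lia.
exact: subset_trans (IH H1) (Hsub H2).
Qed.

Definition Q u w := [exists m : 'I_t.+1, [&& (0 < m), (u \in W m :\: W m.-1),
   (w \in W m :\: W m.-1) & (p1 w == i)]].

Definition Ci := [set u | (u \notin S) && (p1 u == i)].
Definition Cj := [set u | (u \notin S) && (p1 u == j)].
Definition Bl := Cj :&: [set u | [exists w, Q u w]].
Definition Mv := Cj :\: [set u | [exists w, Q u w]].

Definition f u := odflt u [pick w | Q u w].

Lemma notS_of m x : 0 < m <= t -> x \in W m :\: W m.-1 -> x \notin S.
Proof.
move=> Hm /setDP [_ H]; apply/negP => xS; move/negP: H; apply.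
have xW : x \in W 0 by rewrite H0.
by apply: (subsetP (Wmono _)) xW; lia.
Qed.

Lemma same_round m1 m2 x : 0 < m1 <= t -> 0 < m2 <= t ->
  x \in W m1 :\: W m1.-1 -> x \in W m2 :\: W m2.-1 -> m1 = m2.
Proof.
move=> Hm1 Hm2 /setDP [A1 B1] /setDP [A2 B2].
case: (ltngtP m1 m2) => // H.
  by move/negP: B2; case; apply: (subsetP (Wmono _)) A1; lia.
by move/negP: B1; case; apply: (subsetP (Wmono _)) A2; lia.
Qed.

Lemma card_Bl : #|Bl| <= #|Ci|.
Proof.
have fQ : forall u, u \in Bl -> Q u (f u).
  move=> u; rewrite !inE => /andP [_ /existsP [w Hw]].
  by rewrite /f; case: pickP => [x Hx|/(_ w)] /=; [| rewrite Hw].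
rewrite -(card_in_imset (f := f)).
  apply: subset_leq_card; apply/subsetP => w /imsetP [u uB ->].
  have /existsP [m /and4P [Hm _ Hw /eqP Hp]] := fQ u uB.
  rewrite inE Hp eqxx andbT; apply: (notS_of (m := m)) => //.
  by rewrite Hm /= -ltnS.
move=> u1 u2 B1 B2 E.
have /existsP [m1 /and4P [Hm1 U1 Hw1 _]] := fQ u1 B1.
have /existsP [m2 /and4P [Hm2 U2 Hw2 _]] := fQ u2 B2.
rewrite E in Hw1.
have Hm1' : 0 < m1 <= t by rewrite Hm1 /= -ltnS.
have Hm2' : 0 < m2 <= t by rewrite Hm2 /= -ltnS.
have Em := same_round Hm1' Hm2' Hw1 Hw2.
rewrite Em in U1.
apply: (Hinj Hm2' U1 U2).
move: B1 B2; rewrite !inE => /andP [/andP [_ /eqP ->] _] /andP [/andP [_ /eqP ->] _].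
done.
Qed.

Definition q := #|Cj| + 1 - deg e j.

Lemma card_Mv : q <= #|Mv|.
Proof.
have := cardsID [set u | [exists w, Q u w]] Cj.
rewrite -/Bl -/Mv => E.
have := card_Bl; have := Hc1; rewrite /q /preim_count -/Ci -/Cj.
lia.
Qed.

Lemma move_adm : exists p2, admissible sigma t e W p2.
Proof.
have /card_geqP [s [us ss subs]] := card_Mv.
pose M := [set x in s].
have cM : #|M| = q by rewrite cardsE (card_uniqP us).
have MMv : M \subset Mv by apply/subsetP => x; rewrite inE => /subs.
pose p2 u := if u \in M then i else p1 u.
have MC : forall u, u \in M -> (u \notin S) && (p1 u == j).
  by move=> u /(subsetP MMv); rewrite !inE => /andP [_ /andP [-> ->]].
exists p2; split => //.
- move=> k Hk v Hv; rewrite /p2; case: ifP => HM; last exact: Hpar.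
  apply: (Hpj Hk Hv); by have /andP [_ /eqP] := MC _ HM.
- move=> k Hk u v Hu Hv; rewrite /p2.
  have blk : forall x y, x \in M -> y \notin M -> x \in W k :\: W k.-1 ->
      y \in W k :\: W k.-1 -> i = p1 y -> False.
    move=> x y xM yM Hx Hy Ey.
    move/(subsetP MMv): xM; rewrite !inE => /andP [/negP Hn _]; apply: Hn.
    apply/existsP; exists y; apply/existsP.
    have Hk' : k < t.+1 by lia.
    exists (Ordinal Hk') => /=; rewrite Hx Hy Ey eqxx andbT; lia.
  case: ifP => uM; case: ifP => vM.
  + move=> _; apply: (Hinj Hk Hu Hv).
    by have /andP [_ /eqP ->] := MC _ uM; have /andP [_ /eqP ->] := MC _ vM.
  + by move=> E; case: (blk u v uM (negbT vM) Hu Hv E).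
  + by move=> E; case: (blk v u vM (negbT uM) Hv Hu (esym E)).
  + exact: (Hinj Hk Hu Hv).
- move=> v; rewrite /preim_count.
  have Hv : forall u w, (p2 u == w) = if u \in M then i == w else p1 u == w.
    by move=> u w; rewrite /p2; case: ifP.
  case: (eqVneq v i) => [->|vi].
    have : [set u | (u \notin S) && (p2 u == i)] \subset Ci :|: M.
      apply/subsetP => u; rewrite inE [u \in Ci :|: M]inE Hv; case: ifP => uM.
        by rewrite orbT.
      by move=> H; rewrite inE H.
    move=> /subset_leq_card Hl.
    rewrite iS.
    have := cardsU Ci M; have := Hc1; have := Hc2; move: cM.
    rewrite /q /preim_count -/Ci -/Cj.
    lia.
  case: (eqVneq v j) => [->|vj].
    have : [set u | (u \notin S) && (p2 u == j)] \subset Cj :\: M.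
      apply/subsetP => u; rewrite inE [u \in Cj :\: M]inE Hv; case: ifP => uM /=.
        by rewrite (negbTE ij) andbF.
      by move=> H; rewrite inE H.
    move=> /subset_leq_card Hl.
    rewrite jS.
    have MCj : M \subset Cj.
      by apply/subsetP => u uM; rewrite inE; exact: MC.
    have := cardsDS MCj; have := Hc1; have := Hc2; move: cM.
    rewrite /q /preim_count -/Ci -/Cj.
    lia.
  have E : [set u | (u \notin S) && (p2 u == v)] = [set u | (u \notin S) && (p1 u == v)].
    apply/setP => u; rewrite !inE Hv; case: ifP => // uM.
    have /andP [_ /eqP ->] := MC _ uM.
    by rewrite eq_sym (negbTE vi) eq_sym (negbTE vj) !andbF.
  by rewrite E; apply: Hcap.
Qed.

End Move.

Definition pot n t (V : nat -> {set 'I_n}) : nat :=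
  \sum_(m < t.+1) \sum_(x in V m) (x : nat).

Lemma adm_mono n sigma t (e : rel 'I_n) V pi a b :
  admissible sigma t e V pi -> a <= b <= t -> V a \subset V b.
Proof.
case => _ Hsub _ _ _.
elim: b => [|b IH]; first by rewrite leqn0 => /andP [/eqP -> _].
move=> /andP []; rewrite leq_eqVlt => /orP [/eqP -> //| H] Hb.
have H1 : a <= b <= t by apply/andP; split; [rewrite -ltnS | apply: ltnW].
have H2 : 0 < b.+1 <= t by rewrite Hb.
exact: subset_trans (IH H1) (Hsub _ H2).
Qed.

Section Swap.
Variables (n sigma t : nat) (e : rel 'I_n).
Local Notation S := (sources n sigma).
Variables (V : nat -> {set 'I_n}) (pi : 'I_n -> 'I_n) (k : nat) (i j : 'I_n).
Hypothesis Hadm : admissible sigma t e V pi.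
Hypothesis Hk : 0 < k <= t.
Hypothesis Hi : i \in V k :\: V k.-1.
Hypothesis Hj : j \in V k.-1.
Hypothesis Hij : i < j.
Hypothesis Hdeg : deg e j <= deg e i.

Definition sw x := if x == i then j else if x == j then i else x.

Lemma swK : involutive sw.
Proof.
move=> x; rewrite /sw.
case: (eqVneq x i) => [->|xi]; first by rewrite eqxx; case: eqVneq => // ->.
case: (eqVneq x j) => [->|xj]; first by rewrite eqxx.
by rewrite (negbTE xi) (negbTE xj).
Qed.

Lemma sw_inj : injective sw. Proof. exact: (can_inj swK). Qed.

Lemma sw_eq a v : (sw a == v) = (a == sw v).
Proof. by rewrite -(inj_eq sw_inj) swK. Qed.

Lemma swi : sw i = j. Proof. by rewrite /sw eqxx. Qed.
Lemma swj : sw j = i. Proof. by rewrite /sw eqxx; case: eqVneq => // ->. Qed.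
Lemma swD x : x != i -> x != j -> sw x = x.
Proof. by move=> /negbTE xi /negbTE xj; rewrite /sw xi xj. Qed.

Lemma Vmono a b : a <= b <= t -> V a \subset V b.
Proof.
case: Hadm => _ Hsub _ _ _.
elim: b => [|b IH]; first by rewrite leqn0 => /andP [/eqP -> _].
move=> /andP []; rewrite leq_eqVlt => /orP [/eqP -> //| H] Hb.
have H1 : a <= b <= t by lia.
have H2 : 0 < b.+1 <= t by lia.
exact: subset_trans (IH H1) (Hsub _ H2).
Qed.

Lemma iS : i \notin S.
Proof.
case: Hadm => H0 _ _ _ _.
apply/negP => iS; move: Hi => /setDP [_ /negP]; apply.
have : i \in V 0 by rewrite H0.
by apply: (subsetP (Vmono _)); lia.
Qed.

Lemma jS : j \notin S.
Proof. have := iS; rewrite !inE; lia. Qed.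

Lemma ij : i != j.
Proof. by apply/eqP => E; move: Hij; rewrite E ltnn. Qed.

Lemma swS x : (sw x \in S) = (x \in S).
Proof.
case: (eqVneq x i) => [->|xi]; first by rewrite swi (negbTE iS) (negbTE jS).
case: (eqVneq x j) => [->|xj]; first by rewrite swj (negbTE iS) (negbTE jS).
by rewrite swD.
Qed.

Lemma i_imp_j m : m <= t -> i \in V m -> j \in V m.
Proof.
move=> mt iV.
case: (leqP k m) => km.
  by apply: (subsetP (Vmono _)) Hj; lia.
move: Hi => /setDP [_ /negP []].
by apply: (subsetP (Vmono _)) iV; lia.
Qed.

Definition W m := sw @^-1: V m.
Definition p1 x := sw (pi (sw x)).

Lemma inW m x : (x \in W m) = (sw x \in V m).
Proof. by rewrite inE. Qed.

Lemma preim1 v : preim_count sigma p1 v = preim_count sigma pi (sw v).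
Proof.
rewrite /preim_count -(card_preimset _ sw_inj); apply: eq_card => u.
by rewrite !inE /p1 sw_eq swK; have := swS u; rewrite !inE => ->.
Qed.

Lemma W_adm : exists p2, admissible sigma t e W p2.
Proof.
case: Hadm => H0 Hsub Hpar Hinj Hcap.
apply: (@move_adm n sigma t e W p1 i j).
- by apply/setP => x; rewrite inW H0 swS.
- move=> m Hm; apply/subsetP => x; rewrite !inW; exact: (subsetP (Hsub _ Hm)).
- move=> m Hm v /setDP [vW vS]; rewrite inW /p1 swK.
  by apply: (Hpar _ Hm); apply/setDP; split; [rewrite -inW | rewrite swS].
- move=> m Hm u v /setDP [uW uN] /setDP [vW vN].
  move=> /sw_inj E; apply: sw_inj; apply: (Hinj _ Hm _ _ _ _ E);
  by apply/setDP; rewrite -!inW.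
- move=> m Hm u /setDP [uW uS] /(congr1 sw); rewrite /p1 swK swj => E.
  have : pi (sw u) \in V m.-1.
    by apply: (Hpar _ Hm); apply/setDP; split; [rewrite -inW | rewrite swS].
  rewrite E => iV; rewrite inW swi; apply: i_imp_j => //; lia.
- move=> v vi vj; rewrite preim1 swD //; exact: Hcap.
- exact: iS.
- exact: jS.
- exact: ij.
- rewrite preim1 swi; have := Hcap j; rewrite jS //.
- rewrite !preim1 swi swj; have := Hcap j; have := Hcap i; rewrite jS iS; lia.
- exact: Hdeg.
Qed.

Lemma cardW : #|W t| = #|V t|.
Proof. exact: card_preimset sw_inj. Qed.

Lemma sum_sw (A : {set 'I_n}) : (i \in A -> j \in A) ->
  \sum_(y in A) (sw y : nat) + ((j \in A) && (i \notin A)) * (j - i) = \sum_(y in A) (y : nat).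
Proof.
move=> HA.
have rest : forall P : pred 'I_n, (forall y, P y -> (y != i) && (y != j)) ->
   \sum_(y | P y) (sw y : nat) = \sum_(y | P y) (y : nat).
  by move=> P HP; apply: eq_bigr => y /HP /andP [a b]; rewrite swD.
case: (boolP (j \in A)) => jA; last first.
  rewrite addn0; apply: rest => y yA; apply/andP; split; apply/eqP => E.
    by move: yA; rewrite E => /HA; rewrite (negbTE jA).
  by move: yA; rewrite E (negbTE jA).
rewrite (bigD1 j jA) [in RHS](bigD1 j jA) /= swj.
case: (boolP (i \in A)) => iA /=.
  have iP : (i \in A) && (i != j) by rewrite iA ij.
  rewrite (bigD1 i iP) [in RHS](bigD1 i iP) /= swi.
  rewrite (rest _) ?addn0 ?addnA 1?[j + i]addnC //.
  by move=> y /andP [/andP [_ ->] ->].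
rewrite (rest _).
  by rewrite mul1n addnAC subnKC // ltnW.
by move=> y /andP [yA ->]; rewrite andbT; apply/eqP => E; move: iA; rewrite -E => /negP; apply; exact: yA.
Qed.

Lemma potW : pot t W < pot t V.
Proof.
rewrite /pot.
have inner : forall m : 'I_t.+1, \sum_(x in W m) (x : nat) = \sum_(y in V m) (sw y : nat).
  move=> m; rewrite (reindex_inj sw_inj) /=.
  by apply: eq_big => y; rewrite ?inE ?swK.
have Hm0 : k.-1 < t.+1 by lia.
pose m0 := Ordinal Hm0.
rewrite (bigD1 m0) // [in X in _ < X](bigD1 m0) //=.
have E0 := @sum_sw (V k.-1) (@i_imp_j k.-1 ltac:(lia)).
move: Hi => /setDP [_ iN].
rewrite Hj iN /= mul1n in E0.
have Hle : \sum_(i0 < t.+1 | i0 != m0) \sum_(x in W i0) (x : nat) <=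
           \sum_(i0 < t.+1 | i0 != m0) \sum_(x in V i0) (x : nat).
  apply: leq_sum => m _; rewrite inner.
  have := @sum_sw (V m) (@i_imp_j m ltac:(have := ltn_ord m; lia)); lia.
move: (inner m0) => /= ->.
move: Hle; set X := \sum_(i0 < t.+1 | i0 != m0) \sum_(x in W i0) (x : nat) => Hle.
apply: (leq_trans (n := \sum_(y in V k.-1) (y : nat) + X)).
  rewrite ltn_add2r -E0 -{1}(addn0 (\sum_(y in V k.-1) (sw y : nat))).
  by rewrite ltn_add2l subn_gt0.
by rewrite leq_add2l.
Qed.

End Swap.

Lemma inner_bound n (A : {set 'I_n}) : \sum_(x in A) (x : nat) <= n * n.
Proof.
apply: (leq_trans (n := \sum_(x in A) n)).
  by apply: leq_sum => x _; apply: ltnW.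
rewrite sum_nat_const leq_mul2r; apply/orP; right.
by apply: leq_trans (max_card _) _; rewrite card_ord.
Qed.

Lemma pot_bound n t (V : nat -> {set 'I_n}) : pot t V < t.+1 * (n * n) + 1.
Proof.
rewrite addn1 ltnS /pot.
apply: (leq_trans (n := \sum_(m < t.+1) n * n)).
  by apply: leq_sum => m _; apply: inner_bound.
by rewrite sum_nat_const card_ord.
Qed.

Unset Implicit Arguments.
Theorem lemma1 (n sigma t : nat) (e : rel 'I_n)
  (He : simple_graph e) (Hconn : connected_graph e)
  (Hsigma : 1 <= sigma) (Hsn : sigma <= n)
  (Hord : forall i j : 'I_n, sigma <= i -> i <= j -> deg e j <= deg e i) :
  exists (Vs : nat -> {set 'I_n}) (pi : 'I_n -> 'I_n),
    [/\ admissible sigma t e Vs pi,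
        layered t Vs &
        forall (Ws : nat -> {set 'I_n}) (rho : 'I_n -> 'I_n),
          admissible sigma t e Ws rho -> #|Ws t| <= #|Vs t| ].
Proof.
pose K := t.+1 * (n * n) + 1.
pose mu (V : nat -> {set 'I_n}) := (n - #|V t|) * K + pot t V.
have minimal : forall Vs pi, admissible sigma t e Vs pi ->
    (forall W rho, admissible sigma t e W rho -> mu Vs <= mu W) ->
    exists (Vs : nat -> {set 'I_n}) (pi : 'I_n -> 'I_n),
    [/\ admissible sigma t e Vs pi,
        layered t Vs &
        forall (Ws : nat -> {set 'I_n}) (rho : 'I_n -> 'I_n),
          admissible sigma t e Ws rho -> #|Ws t| <= #|Vs t| ].
  move=> Vs pi Ha Hmin; exists Vs, pi; split => //.
    move=> k Hk i j Hi Hj.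
    case: (ltnP j i) => // Hji.
    have Hij : i < j.
      rewrite ltn_neqAle Hji andbT; apply/eqP => E.
      have E' : i = j by apply: val_inj.
      by move: Hi; rewrite E' inE Hj.
    have Hdeg : deg e j <= deg e i.
      apply: Hord; last exact: ltnW.
      rewrite leqNgt; apply/negP => iS.
      have [H0 _ _ _ _] := Ha.
      have : i \in Vs 0 by rewrite H0 inE.
      have Hab : 0 <= k.-1 <= t by lia.
      move/(subsetP (adm_mono Ha Hab)).
      by move: Hi => /setDP [_ /negbTE ->].
    have [p2 Hp2] := W_adm Ha Hk Hi Hj Hij Hdeg.
    have := Hmin _ _ Hp2; rewrite /mu (cardW t Vs i j).
    have := potW Ha Hk Hi Hj Hij Hdeg; rewrite leq_add2l; lia.
  move=> W rho HW; case: (leqP #|W t| #|Vs t|) => // Hlt.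
  have := Hmin _ _ HW; rewrite /mu.
  have := pot_bound t W; have := max_card (mem (W t)); rewrite card_ord -/K.
  set a := #|W t|; set b := #|Vs t|; set pW := pot t W; set pV := pot t Vs.
  move=> Ha' HpW Hle.
  have : (n - a) * K + pW < (n - b) * K.
    apply: (leq_trans (n := (n - a).+1 * K)).
      by rewrite mulSn addnC ltn_add2r.
    by rewrite leq_mul2r; apply/orP; right; lia.
  lia.
have [V0 [pi0 Ha0]] := exists_adm He Hconn Hsigma Hsn t.
suff : forall N Vs pi, admissible sigma t e Vs pi -> mu Vs <= N ->
    exists (Vs : nat -> {set 'I_n}) (pi : 'I_n -> 'I_n),
    [/\ admissible sigma t e Vs pi,
        layered t Vs &
        forall (Ws : nat -> {set 'I_n}) (rho : 'I_n -> 'I_n),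
          admissible sigma t e Ws rho -> #|Ws t| <= #|Vs t| ].
  by move=> H; exact: (H _ _ _ Ha0 (leqnn _)).
elim=> [|N IH] Vs pi Ha Hmu.
  apply: (minimal _ _ Ha) => W rho _; lia.
case: (classic (exists W rho, admissible sigma t e W rho /\ mu W < mu Vs)).
  move=> [W [rho [HW Hlt]]]; apply: (IH W rho HW); lia.
move=> Hn; apply: (minimal _ _ Ha) => W rho HW.
rewrite leqNgt; apply/negP => Hlt; apply: Hn; exists W, rho; split => //.
Qed.
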